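(* (1) Let $S$ be a nonempty subset of $\mathbb{Z}$ and let $\mathcal{T}_1\subseteq\mathcal{T}_2\subseteq\mathbb{N}$. Then for all integers $0\le k<|S|$, $k!_{S,\mathcal{T}_1}$ divides $k!_{S,\mathcal{T}_2}$. (2) Let $S_1\subseteq S_2$ be nonempty subsets of $\mathbb{Z}$ and let $\mathcal{T}\subseteq\mathbb{N}$. Then for all integers $0\le k<|S_1|$, $k!_{S_2,\mathcal{T}}$ divides $k!_{S_1,\mathcal{T}}$.
   Context: $\mathbb{N}=\{0,1,2,\dots\}$. For an integer $b\ge0$ and $a\in\mathbb{Z}$ define $\operatorname{ord}_b(a):=\sup\{k\in\mathbb{N}: a\mathbb{Z}\subseteq b^k\mathbb{Z}\}$ (convention $0^0=1$); thus for $b\ge2$ it is the largest $k$ with $b^k\mid a$ ($+\infty$ for $a=0$), $\operatorname{ord}_0(a)=+\infty$ if $a=0$ and $0$ otherwise, and $\operatorname{ord}_1(a)=+\infty$. For nonempty $S\subseteq\mathbb{Z}$, a $b$-ordering of $S$ is a sequence $(a_i)_{i\ge0}$ in $S$ such that for each $i\ge1$, $a_i$ attains $\min_{a'\in S}\sum_{j=0}^{i-1}\operatorname{ord}_b(a'-a_j)$; the $b$-exponent sequence is $\alpha_k(S,b):=\sum_{j=0}^{k-1}\operatorname{ord}_b(a_k-a_j)$ for any $b$-ordering (independent of the choice). For $\mathcal{T}\subseteq\mathbb{N}$ the generalized factorial is $k!_{S,\mathcal{T}}:=\prod_{b\in\mathcal{T}}b^{\alpha_k(S,b)}$, with conventions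 $b^{+\infty}=0$ for $b=0$ and $b\ge2$, $1^{+\infty}=1$, and $b^0=1$ for all $b\in\mathbb{N}$. *)

(* Defs.v *)
From HB Require Import structures.
From mathcomp Require Import all_boot all_order all_algebra.
From mathcomp Require Import boolp classical_sets functions cardinality fsbigop.
From Stdlib Require Import ClassicalEpsilon.
Set Implicit Arguments. Unset Strict Implicit. Unset Printing Implicit Defensive.
Import Order.TTheory GRing.Theory Num.Theory.

Local Open Scope classical_set_scope.

(* Extended naturals N u {+oo}: [Some n] = n, [None] = +oo. *)
Definition enat := option nat.

Definition eadd (x y : enat) : enat :=
  match x, y with Some m, Some n => Some (m + n)%N | _, _ => None end.

Definition ele (x y : enat) : bool :=
  match x, y with
  | _, None => true
  | None, Some _ => false
  | Some m, Some n => (m <= n)%N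
  end.

(* ord_b(a) = sup {k in N : aZ \subseteq b^k Z}, written out by cases:
   b = 1 or a = 0 : +oo ;  b = 0, a <> 0 : 0 ;
   b >= 2, a <> 0 : the largest k with b^k | a (such k satisfy k <= |a|). *)
Definition ordb (b : nat) (a : int) : enat :=
  if (b == 1%N) || (a == 0%R) then None
  else if b == 0%N then Some 0%N
  else Some (\max_(k < `|a|%N.+1 | (b ^ k %| `|a|%N)%N) (k : nat)).

Definition ordsum (b : nat) (a : nat -> int) (i : nat) (x : int) : enat :=
  foldr eadd (Some 0%N) [seq ordb b (x - a j)%R | j <- iota 0 i].

Definition is_bordering (S : set int) (b : nat) (a : nat -> int) : Prop :=
  (forall i, S (a i)) /\
  (forall i, (0 < i)%N -> forall x, S x -> ele (ordsum b a i (a i)) (ordsum b a i x)).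

Definition bordering (S : set int) (b : nat) : nat -> int :=
  epsilon (inhabits (fun _ => 0%R)) (is_bordering S b).

Definition alpha (S : set int) (b k : nat) : enat :=
  ordsum b (bordering S b) k (bordering S b k).

(* b ^ e with b^{+oo} = 0 for b = 0 and b >= 2, 1^{+oo} = 1, b^0 = 1 *)
Definition epow (b : nat) (e : enat) : nat :=
  match e with Some n => (b ^ n)%N | None => if b == 1%N then 1%N else 0%N end.

(* k!_{S,T} = prod_{b in T} b^{alpha_k(S,b)}, as a finitely supported product
   (only finitely many factors differ from 1 when k < |S|). *)
Definition gfact (S : set int) (T : set nat) (k : nat) : nat :=
  (\big[muln/1%N]_(b \in T) epow b (alpha S b k))%N.

(* k < |S|, i.e. S contains at least k+1 distinct elements *)
Definition card_gt (S : set int) (k : nat) : Prop :=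
  exists s : seq int, [/\ uniq s, size s = k.+1 & forall x, x \in s -> S x].

(* Main.v *)
Require Import Defs.
From HB Require Import structures.
From mathcomp Require Import all_boot all_order all_algebra.
From mathcomp Require Import boolp classical_sets functions cardinality fsbigop.
From Stdlib Require Import ClassicalEpsilon Classical.
From mathcomp Require Import zify ring.
Set Implicit Arguments. Unset Strict Implicit. Unset Printing Implicit Defensive.
Import Order.TTheory GRing.Theory Num.Theory.
Local Open Scope classical_set_scope.

Lemma eaddC x y : eadd x y = eadd y x.
Proof. by case: x; case: y => //= m n; rewrite addnC. Qed.
Lemma eaddA x y z : eadd x (eadd y z) = eadd (eadd x y) z.
Proof. by case: x; case: y; case: z => //= m n p; rewrite addnA. Qed.
Lemma eadd0 x : eadd (Some 0) x = x.
Proof. by case: x. Qed.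
Lemma ele_refl x : ele x x.
Proof. by case: x => /=. Qed.
Lemma ele_trans x y z : ele x y -> ele y z -> ele x z.
Proof. case: x; case: y; case: z => //= m n p; lia. Qed.
Lemma ele_None x : ele x None.
Proof. by case: x. Qed.
Lemma ele0 x : ele (Some 0) x.
Proof. by case: x. Qed.
Lemma ele_add2l c u v : ele (eadd (Some c) u) (eadd (Some c) v) = ele u v.
Proof. case: u; case: v => //= m n; lia. Qed.
Lemma ele_addr u v : ele u (eadd u v).
Proof. case: u; case: v => //= m n; lia. Qed.

Section Ord.
Variable b : nat.
Hypothesis b2 : (1 < b)%N.

Lemma ordbP (a : int) n : a != 0%R -> (b ^ n %| `|a|)%N -> ~~ (b ^ n.+1 %| `|a|)%N ->
  ordb b a = Some n.
Proof.
move=> a0 dn ndn; rewrite /ordb (negbTE a0) orbF.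
have -> : (b == 1%N) = false by apply/negbTE; rewrite neq_ltn b2 orbT.
have -> : (b == 0%N) = false by apply/negbTE; rewrite -lt0n ltnW.
congr Some; apply/eqP; rewrite eqn_leq; apply/andP; split.
  apply/bigmax_leqP => i di; rewrite leqNgt; apply/negP => lt.
  by move/negP: ndn; apply; apply: dvdn_trans di; apply: dvdn_exp2l.
have ap : (0 < `|a|)%N by rewrite absz_gt0.
have nlt : (n < `|a|.+1)%N.
  apply: (leq_trans (ltn_expl n b2)); exact: leq_trans (dvdn_leq ap dn) (leqnSn _).
exact: (@leq_bigmax_cond _ (fun k : 'I_(`|a|.+1) => (b ^ k %| `|a|)%N) (fun k => nat_of_ord k) (Ordinal nlt)).
Qed.

Lemma ordb_ex (a : int) : a != 0%R -> exists n, ordb b a = Some n /\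
   (b ^ n %| `|a|)%N /\ ~~ (b ^ n.+1 %| `|a|)%N.
Proof.
move=> a0.
have ap : (0 < `|a|)%N by rewrite absz_gt0.
have exP : exists i, (fun k => b ^ k %| `|a|)%N i by exists 0%N; rewrite expn0 dvd1n.
have ubP : forall i, (fun k => b ^ k %| `|a|)%N i -> (i <= `|a|)%N.
  move=> i /= di; apply: ltnW; apply: (leq_trans (ltn_expl i b2)); exact: dvdn_leq.
case: (ex_maxnP exP ubP) => n dn mx; exists n.
have ndn : ~~ (b ^ n.+1 %| `|a|)%N.
  by apply/negP => /mx; rewrite ltnn.
by split => //; apply: ordbP.
Qed.

Lemma ordb_ndvd (a : int) : ~~ (b %| `|a|)%N -> ordb b a = Some 0.
Proof.
move=> nd; have a0 : a != 0%R by apply: contraNneq nd => ->; rewrite dvdn0.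
by apply: ordbP => //; rewrite ?expn0 ?dvd1n ?expn1.
Qed.

Lemma ordbM (z : int) : ordb b (z * b%:Z)%R = eadd (Some 1) (ordb b z).
Proof.
have [->|z0] := eqVneq z 0%R.
  by rewrite mul0r /ordb eqxx !orbT.
have [n [-> [dn ndn]]] := ordb_ex z0.
have bp : (0 < b)%N by apply: ltnW.
apply: ordbP.
- by rewrite mulf_neq0 //; case: (b) b2.
- by rewrite abszM /= mulnC expnS dvdn_pmul2l.
- by rewrite abszM /= mulnC expnS dvdn_pmul2l.
Qed.

Definition cost (s : seq int) (x : int) : enat :=
  foldr eadd (Some 0%N) [seq ordb b (x - a)%R | a <- s].

Lemma cost_nil x : cost [::] x = Some 0. Proof. by []. Qed.
Lemma cost_cons y s x : cost (y :: s) x = eadd (ordb b (x - y)%R) (cost s x).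
Proof. by []. Qed.
Lemma cost_rcons s y x : cost (rcons s y) x = eadd (cost s x) (ordb b (x - y)%R).
Proof.
rewrite /cost; elim: s => [|z s IH] /=; first by case: (ordb b (x - y)%R) => // n /=; rewrite addn0.
by rewrite IH; apply: eaddA.
Qed.

Definition cls (x : int) : int := (x %% b%:Z)%Z.
Definition phi (x : int) : int := (x %/ b%:Z)%Z.

Lemma diff_same x y : cls x = cls y -> (x - y)%R = ((phi x - phi y) * b%:Z)%R.
Proof.
rewrite /cls /phi => e.
rewrite {1}(divz_eq x b%:Z) {1}(divz_eq y b%:Z) e.
by rewrite mulrBl; ring.
Qed.

Lemma diff_other x y : cls x != cls y -> ordb b (x - y)%R = Some 0.
Proof.
move=> ne; apply: ordb_ndvd; apply: contra ne => d.
rewrite /cls; apply/eqP; apply/eqP; rewrite eqz_mod_dvd dvdzE /=.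
by [].
Qed.

Lemma cost_split r s x : cls x = r ->
  cost s x = eadd (Some (count (fun y => cls y == r) s))
                  (cost [seq phi y | y <- s & cls y == r] (phi x)).
Proof.
move=> cx; elim: s => [|y s IH] //=.
rewrite cost_cons IH.
case: eqP => cy.
  rewrite diff_same ?cx ?cy // ordbM cost_cons.
  case: (ordb b _) => [m|] //=; case: (cost _ _) => [p|] //=; congr Some; lia.
rewrite diff_other ?eadd0 //; last by rewrite cx; apply/eqP => e; apply: cy; rewrite e.

Qed.

End Ord.

Fixpoint grev (b : nat) (S : set int) (r : seq int) : Prop :=
  match r with
  | [::] => True
  | y :: r' => grev b S r' /\ S y /\ forall x, S x -> ele (cost b (rev r') y) (cost b (rev r') x)
  end.
Definition greedy b S s := grev b S (rev s).

Lemma greedy_rcons b S s y : greedy b S (rcons s y) <->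
  greedy b S s /\ S y /\ (forall x, S x -> ele (cost b s y) (cost b s x)).
Proof. by rewrite /greedy rev_rcons /= revK. Qed.

Lemma greedy_cat b S s1 s2 : greedy b S (s1 ++ s2) -> greedy b S s1.
Proof.
elim/last_ind: s2 => [|s2 y IH]; first by rewrite cats0.
by rewrite -rcons_cat => /greedy_rcons [] /IH.
Qed.

Lemma greedy_mem b S s x : greedy b S s -> x \in s -> S x.
Proof.
elim/last_ind: s => [|s y IH] // /greedy_rcons [g [Sy _]].
by rewrite mem_rcons inE => /orP [/eqP->|]; auto.
Qed.

Lemma greedy_mono b S Q : forall P e G0 g, greedy b S (rcons G0 g) ->
  P ++ e :: Q = rcons G0 g -> ele (cost b P e) (cost b G0 g).
Proof.
elim/last_ind: Q => [|Q h IH] P e G0 g.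
  by rewrite cats1 => gr /rcons_inj [-> ->]; apply: ele_refl.
move=> gr; rewrite -rcons_cons -rcons_cat => /rcons_inj [e1 e2].
subst G0 h.
have [gr0 [Sg _]] := (greedy_rcons b S (P ++ e :: Q) g).1 gr.
case/lastP E: (P ++ e :: Q) gr0 => [|G10 g1]; first by case: (P) E.
move=> gr1.
have h1 := IH P e G10 g1 gr1 E.
have [_ [_ m1]] := (greedy_rcons b S G10 g1).1 gr1.
apply: (ele_trans h1); apply: (ele_trans (m1 g Sg)).
by rewrite cost_rcons; apply: ele_addr.
Qed.

Lemma pigeon (f : int -> int) (A G : seq int) : (size A < size G)%N ->
  exists2 g, g \in G & (count (fun y => f y == f g) A < count (fun y => f y == f g) G)%N.
Proof.
have [n] := ubnP (size G); elim: n G A => // n IH G A.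
case: G => [|g G'] //= szn lt.
set p := (fun y => f y == f g).
have [lt1|ge1] := ltnP (count p A) (count p (g :: G')).
  by exists g; rewrite ?mem_head.
set G1 := [seq y <- g :: G' | ~~ p y].
set A1 := [seq y <- A | ~~ p y].
have cG := count_predC p (g :: G').
have cA := count_predC p A.
have pg : p g by rewrite /p eqxx.
have sG1 : size G1 = (size (g :: G') - count p (g :: G'))%N.
  by rewrite size_filter -cG addKn.
have sA1 : size A1 = (size A - count p A)%N by rewrite size_filter -cA addKn.
have c1 : (1 <= count p (g :: G'))%N by rewrite /= pg.
have [g' g'G1 lt'] : exists2 g', g' \in G1 &
   (count (fun y => f y == f g') A1 < count (fun y => f y == f g') G1)%N.
  apply: IH; first by rewrite sG1 /=; move: szn c1 => /=; lia.
  rewrite sA1 sG1; move: lt ge1 c1 => /=; lia.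
move: g'G1; rewrite mem_filter => /andP [npg' g'G].
exists g'; first by [].
have E : forall s, count (fun y => f y == f g') [seq y <- s | ~~ p y] =
                   count (fun y => f y == f g') s.
  move=> s; rewrite count_filter; apply: eq_count => y /=.
  rewrite /p; case: (f y =P f g') => //= ->; exact: npg'.
by move: lt'; rewrite /A1 /G1 !E.
Qed.

Lemma split_last (p : pred int) G : has p G ->
  exists P e Q, [/\ G = P ++ e :: Q, p e & ~~ has p Q].
Proof.
elim/last_ind: G => [|G h IH] //.
rewrite has_rcons; case: (boolP (p h)) => ph /=.
  by move=> _; exists G, h, [::]; rewrite cats1.
move=> /IH [P [e [Q [-> pe nQ]]]].
exists P, e, (rcons Q h); split => //.
  by rewrite rcons_cat rcons_cons.
by rewrite has_rcons (negbTE ph).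
Qed.

Section Main.
Variable b : nat.
Hypothesis b2 : (1 < b)%N.

Definition Sub (S : set int) (r : int) : set int :=
  fun z => exists x, S x /\ cls b x = r /\ phi b x = z.

Lemma greedy_filter S r G : greedy b S G ->
  greedy b (Sub S r) [seq phi b y | y <- G & cls b y == r].
Proof.
elim/last_ind: G => [|G y IH] // /greedy_rcons [gG [Sy my]].
rewrite filter_rcons; case: eqP => cy; last exact: IH.
rewrite map_rcons; apply/greedy_rcons; split; first exact: IH.
split; first by exists y.
move=> z [x [Sx [cx <-]]].
have := my x Sx.
by rewrite (cost_split b2 G cy) (cost_split b2 G cx) ele_add2l.
Qed.

Lemma mainK n : forall S G0 g A, greedy b S (rcons G0 g) -> (size A <= size G0)%N ->
  ele (cost b G0 g) (Some n) -> exists2 x, S x & ele (cost b A x) (Some n).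
Proof.
elim/ltn_ind: n => n IH S G0 g A gr sz cn.
have [e0 e0G lt] : exists2 g0, g0 \in rcons G0 g &
   (count (fun y => cls b y == cls b g0) A < count (fun y => cls b y == cls b g0) (rcons G0 g))%N.
  by apply: pigeon; rewrite size_rcons ltnS.
set r := cls b e0 in lt.
set p := (fun y => cls b y == r) in lt.
have hp : has p (rcons G0 g) by apply/hasP; exists e0 => //; rewrite /p eqxx.
have [P [e [Q [EG pe nQ]]]] := split_last hp.
have cQ : count p Q = 0%N by apply/eqP; rewrite eqn0Ngt -has_count.
have cG : count p (rcons G0 g) = (count p P).+1.
  move: cQ; rewrite EG count_cat /=; case: (p e) pe => // _ ->; by rewrite addn1.
have cPe : ele (cost b P e) (Some n).
  by apply: ele_trans cn; apply: (greedy_mono gr); rewrite EG.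
have Se : S e by apply: (greedy_mem gr); rewrite EG mem_cat in_cons eqxx orbT.
have ce : cls b e = r by apply/eqP.
set α := count p A.
have [a0|apos] := eqVneq α 0%N.
  exists e => //.
  rewrite (cost_split b2 A ce) -/p -/α a0.
  have -> : [seq y <- A | p y] = [::].
    by apply: size0nil; rewrite size_filter -/α a0.
  by [].
move: cPe; rewrite (cost_split b2 P ce) -/p.
case E' : (cost b _ (phi b e)) => [n'|] //= le.
have lt' : (n' < n)%N by move: le lt apos; rewrite cG -/α; lia.
have gP : greedy b S (rcons P e).
  by apply: (greedy_cat (s2 := Q)); rewrite cat_rcons -EG.
have gP' := greedy_filter r gP.
rewrite filter_rcons ce eqxx map_rcons in gP'.
have szA' : (size [seq phi b y | y <- A & p y] <= size [seq phi b y | y <- P & p y])%N.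
  by rewrite !size_map !size_filter; move: lt; rewrite cG ltnS.
have cP' : ele (cost b [seq phi b y | y <- P & p y] (phi b e)) (Some n') by rewrite E'; apply: ele_refl.
have [x' [x [Sx [cx <-]]] hx] := IH n' lt' (Sub S r) _ _ _ gP' szA' cP'.
exists x => //.
rewrite (cost_split b2 A cx) -/p -/α.
move: hx; case: (cost b _ (phi b x)) => [m|] //= hm.
move: le lt hm; rewrite cG /α; lia.
Qed.

End Main.

Definition pref (a : nat -> int) n := [seq a j | j <- iota 0 n].

Lemma ordsum_cost b a i x : ordsum b a i x = cost b (pref a i) x.
Proof. by rewrite /ordsum /cost /pref -map_comp. Qed.

Lemma pref_S a n : pref a n.+1 = rcons (pref a n) (a n).
Proof. by rewrite /pref -addn1 iotaD map_cat cats1. Qed.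

Lemma alphaE S b k : alpha S b k = cost b (pref (bordering S b) k) (bordering S b k).
Proof. by rewrite /alpha ordsum_cost. Qed.

Lemma bord_min S b a k x : is_bordering S b a -> S x ->
  ele (cost b (pref a k) (a k)) (cost b (pref a k) x).
Proof.
move=> [_ H] Sx; case: k => [|k]; first exact: ele0.
by rewrite -!ordsum_cost; apply: H.
Qed.

Lemma bord_greedy S b a n : is_bordering S b a -> greedy b S (pref a n).
Proof.
move=> H; elim: n => [|n IH] //.
rewrite pref_S; apply/greedy_rcons; split => //; split; first by case: H.
by move=> x Sx; exact: (bord_min n H Sx).
Qed.

Lemma exists_min b (S : set int) s : S !=set0 ->
  exists x, S x /\ forall y, S y -> ele (cost b s x) (cost b s y).
Proof.
move=> [y0 Sy0].
case: (classic (exists y, S y /\ exists m, cost b s y = Some m)).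
  move=> [y [Sy [m cm]]].
  elim/ltn_ind: m y Sy cm => m IH y Sy cm.
  case: (classic (forall z, S z -> ele (cost b s y) (cost b s z))) => [H|H].
    by exists y.
  move/existsNP: H => [z /not_implyP [Sz nle]].
  move: nle; rewrite cm; case cz: (cost b s z) => [m'|] //= nle.
  apply: (IH m' _ z Sz cz); rewrite ltnNge; exact/negP.
move=> H; exists y0; split => // y Sy.
case cy: (cost b s y) => [m|]; last exact: ele_None.
by exfalso; apply: H; exists y; split => //; exists m.
Qed.

Definition pickmin b (S : set int) s :=
  epsilon (inhabits 0%R) (fun x => S x /\ forall y, S y -> ele (cost b s x) (cost b s y)).
Fixpoint pre b S n := if n is m.+1 then rcons (pre b S m) (pickmin b S (pre b S m)) else [::].
Definition seqa b S i := pickmin b S (pre b S i).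

Lemma pref_pre b S n : pref (seqa b S) n = pre b S n.
Proof. by elim: n => //= n IH; rewrite pref_S IH. Qed.

Lemma bordering_ok S b : S !=set0 -> is_bordering S b (bordering S b).
Proof.
move=> ne; apply: epsilon_spec.
exists (seqa b S).
have spec i := epsilon_spec (inhabits 0%R) _ (exists_min b (pre b S i) ne).
split; first by move=> i; case: (spec i).
by move=> i _ x Sx; rewrite !ordsum_cost pref_pre; apply: (spec i).2.
Qed.

Lemma alpha_mono S1 S2 b k : (1 < b)%N -> S1 !=set0 -> S1 `<=` S2 ->
  ele (alpha S2 b k) (alpha S1 b k).
Proof.
move=> b2 ne S12.
have ne2 : S2 !=set0 by case: ne => x Sx; exists x; apply: S12.
have ha := bordering_ok b ne2; have hc := bordering_ok b ne.
rewrite !alphaE.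
case E: (cost b (pref (bordering S1 b) k) (bordering S1 b k)) => [n|]; last exact: ele_None.
have gr : greedy b S1 (rcons (pref (bordering S1 b) k) (bordering S1 b k)).
  by rewrite -pref_S; apply: bord_greedy.
have sz : (size (pref (bordering S2 b) k) <= size (pref (bordering S1 b) k))%N.
  by rewrite !size_map.
have cn : ele (cost b (pref (bordering S1 b) k) (bordering S1 b k)) (Some n).
  by rewrite E; apply: ele_refl.
have [x Sx hx] := mainK b2 gr sz cn.
exact: ele_trans (bord_min k ha (S12 _ Sx)) hx.
Qed.

Lemma cost0_notin s x : x \notin s -> cost 0 s x = Some 0.
Proof.
elim: s => [|y s IH] //; rewrite in_cons negb_or => /andP [nxy nxs].
rewrite cost_cons IH // /ordb /= subr_eq0 (negbTE nxy) /=.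
by [].
Qed.

Lemma alpha0 S k : card_gt S k -> S !=set0 -> alpha S 0 k = Some 0.
Proof.
move=> [s [us ss sS]] ne.
have ha := bordering_ok 0 ne.
have [x xs xn] : exists2 x, x \in s & x \notin pref (bordering S 0) k.
  case/boolP: (has (fun x => x \notin pref (bordering S 0) k) s) => [/hasP [x ? ?]|/hasPn H].
    by exists x.
  exfalso; have := uniq_leq_size us (fun x xs => negbNE (H x xs)).
  by rewrite ss size_map size_iota ltnn.
have := bord_min k ha (sS x xs).
rewrite alphaE (cost0_notin xn).
by case: (cost _ _ _) => [[|m]|].
Qed.

Lemma alpha_big S k : card_gt S k -> S !=set0 ->
  exists N, forall b, (N <= b)%N -> alpha S b k = Some 0.
Proof.
move=> [s [us ss sS]] ne.
set B := (\max_(x <- s) `|x|)%N.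
exists (B + B + 2)%N => b Nb.
have b2 : (1 < b)%N by lia.
have ha := bordering_ok b ne.
set A := pref (bordering S b) k.
have szs : (size A < size s)%N by rewrite ss size_map size_iota.
have [g gs lt] := pigeon (cls b) szs.
have Bx : forall x, x \in s -> (`|x| <= B)%N.
  move=> x xs; rewrite /B; exact: (@leq_bigmax_seq _ s xpredT absz x xs).
have c1 : count (fun y => cls b y == cls b g) s = 1%N.
  have := count_uniq_mem g us; rewrite gs /= => <-; apply: eq_in_count => y ys /=.
  case: (eqVneq y g) => [->|nyg]; first by rewrite !eqxx.
  apply/negbTE/eqP => cyg.
  have d := diff_same cyg.
  have h1 : (`|(y - g)%R| <= `|y| + `|g|)%N.
    have := leqD_dist y 0 g; by rewrite subr0 sub0r abszN.
  have h2 : (b <= `|(y - g)%R|)%N.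
    rewrite d abszM /=.
    have : (phi b y - phi b g)%R != 0%R.
      apply: contra_neq nyg => e; apply/eqP; rewrite -subr_eq0 d e mul0r.
      by [].
    rewrite -absz_gt0; case: (`|_|)%N => //= m _; lia.
  have := Bx y ys; have := Bx g gs; lia.
have cA : count (fun y => cls b y == cls b g) A = 0%N by move: lt; rewrite c1; lia.
have := bord_min k ha (sS g gs).
rewrite -/A alphaE -/A (cost_split b2 A (erefl (cls b g))) cA.
have -> : [seq phi b y | y <- A & cls b y == cls b g] = [::].
  by apply: size0nil; rewrite size_map size_filter.
by case: (cost _ _ _) => [[|m]|].
Qed.

Lemma epow_mono b e1 e2 : ele e1 e2 -> (epow b e1 %| epow b e2)%N.
Proof.
case: e1 => [n|]; case: e2 => [m|] //= H.
- exact: dvdn_exp2l.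
- by case: eqP => [->|_]; rewrite ?exp1n ?dvdn0.
Qed.

Lemma gfactE S T k N : (forall b, (N <= b)%N -> epow b (alpha S b k) = 1%N) ->
  gfact S T k = (\prod_(i <- iota 0 N | i \in T) epow i (alpha S i k))%N.
Proof.
move=> H; rewrite /gfact.
have := @bigfs nat 1%N muln _ (iota 0 N) (fun i => i \in T) (fun i => epow i (alpha S i k)) (iota_uniq _ _).
rewrite set_mem_set => ->; first by [].
by move=> i _; rewrite mem_iota /= add0n -leqNgt => /H.
Qed.

Lemma prod_dvd (r : seq nat) (F G : nat -> nat) : (forall i, F i %| G i)%N ->
  (\prod_(i <- r) F i %| \prod_(i <- r) G i)%N.
Proof.
move=> H; elim: r => [|i r IH]; rewrite ?big_nil ?big_cons //.
exact: dvdn_mul.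
Qed.

Theorem proposition3p10 :
  (forall (S : set int) (T1 T2 : set nat),
      S !=set0 -> T1 `<=` T2 ->
      forall k : nat, card_gt S k -> (gfact S T1 k %| gfact S T2 k)%N) /\
  (forall (S1 S2 : set int) (T : set nat),
      S1 !=set0 -> S1 `<=` S2 ->
      forall k : nat, card_gt S1 k -> (gfact S2 T k %| gfact S1 T k)%N).
Proof.
split.
  move=> S T1 T2 ne sub k cg.
  have [N HN] := alpha_big cg ne.
  have HN' : forall b, (N <= b)%N -> epow b (alpha S b k) = 1%N by move=> b /HN ->.
  rewrite !(gfactE _ HN') !(big_mkcond (fun i => i \in _)).
  apply: prod_dvd => i.
  case: (boolP (i \in T1)) => h1; last exact: dvd1n.
  by rewrite (mem_set (sub _ (set_mem h1))) dvdnn.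
move=> S1 S2 T ne sub k cg.
have cg2 : card_gt S2 k.
  by case: cg => s [us ss sS]; exists s; split => // x /sS /sub.
have ne2 : S2 !=set0 by case: ne => x Sx; exists x; apply: sub.
have [N1 HN1] := alpha_big cg ne.
have [N2 HN2] := alpha_big cg2 ne2.
have H1 : forall b, (maxn N1 N2 <= b)%N -> epow b (alpha S1 b k) = 1%N.
  by move=> b; rewrite geq_max => /andP [/HN1 -> _].
have H2 : forall b, (maxn N1 N2 <= b)%N -> epow b (alpha S2 b k) = 1%N.
  by move=> b; rewrite geq_max => /andP [_ /HN2 ->].
rewrite (gfactE _ H1) (gfactE _ H2) !(big_mkcond (fun i => i \in _)).
apply: prod_dvd => i.
case: (i \in T); last exact: dvd1n.
case: i => [|[|i]].
- by rewrite (alpha0 cg2 ne2) dvd1n.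
- by case: (alpha S2 1 k) => [m|] /=; rewrite ?exp1n dvd1n.
- by apply: epow_mono; apply: alpha_mono.
Qed.
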